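(* Let $L=(l_1,\dots,l_n)$, $n\ge 4$, be a generic length vector satisfying the strict triangle inequality, and let $l_a\ge l_b\ge l_c$ be its three largest entries (for distinct indices $a,b,c$). Suppose $l_b+l_c>|L|/2$. Then for every vertex $(I,J,K)$ of $\Gamma(L)$, the vertices $(I,J,K)$ and $(J,I,K)$ lie in different connected components of $\Gamma(L)$; i.e. no path in $\Gamma(L)$ connects them.
   Context: Let $n\ge 4$ and $L=(l_1,\dots,l_n)$ be positive reals with $l_i<\sum_{j\ne i}l_j$ for every $i$ (strict triangle inequality), and generic: there is no $J\subseteq[n]$ with $\sum_{i\in J}l_i=\sum_{i\notin J}l_i$. Here $[n]=\{1,\dots,n\}$ and $|L|=\sum_{i=1}^n l_i$. A set $I\subseteq[n]$ is short if $\sum_{i\in I}l_i<|L|/2$ and long otherwise. A cyclically ordered partition of $[n]$ into $k$ parts is a sequence $(A_1,\dots,A_k)$ of pairwise disjoint nonempty sets with union $[n]$, considered up to cyclic shifts $(A_1,\dots,A_k)\sim(A_2,\dots,A_k,A_1)$; there is no ordering inside a part. It is admissible if every part is short. The graph $\Gamma(L)$ has as vertices the admissible cyclically ordered partitions of $[n]$ into 3 parts, written $(I,J,K)$, and as edges the admissible cyclically ordered partitions into 4 parts $(A,B,C,D)$; such an edge is incident to each of the partitions $(A\cup B,C,D)$, $(A,B\cup C,D)$, $(A,B,C\cup D)$, $(D\cup A,B,C)$ that is admissible. Equivalently, two vertices are adjacent iff one is obtained from the other by moving a nonempty proper subset of one part into another part. The mirror image of a vertex $(I,J,K)$ is the vertex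 $(J,I,K)$ (same parts, reversed cyclic order). (The condition $l_b+l_c>|L|/2$ is equivalent to disconnectedness of the moduli space of planar configurations of $L$.) *)

(* Defs.v *)
From HB Require Import structures.
From mathcomp Require Import all_boot all_order all_algebra.
From Stdlib Require Import Relations.
Set Implicit Arguments. Unset Strict Implicit. Unset Printing Implicit Defensive.
Import Order.TTheory GRing.Theory Num.Theory.
Local Open Scope ring_scope.

Definition Ltotal (R : realFieldType) (n : nat) (l : 'I_n -> R) : R := \sum_i l i.

Definition short (R : realFieldType) (n : nat) (l : 'I_n -> R) (I : {set 'I_n}) : bool :=
  \sum_(i in I) l i < Ltotal l / 2%:R.

Definition opart (n : nat) (s : seq {set 'I_n}) : bool :=
  all (fun A : {set 'I_n} => A != set0) s &&
  pairwise (fun A B : {set 'I_n} => [disjoint A & B]) s &&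
  (\bigcup_(A <- s) A == setT).

Definition admissible (R : realFieldType) (n : nat) (l : 'I_n -> R)
  (s : seq {set 'I_n}) : bool := opart s && all (fun A : {set 'I_n} => short l A) s.

Definition cyc_eq (n : nat) (s t : seq {set 'I_n}) : Prop := exists k, t = rot k s.

(* vertices of Gamma(L): (representatives of) admissible cyclically ordered
   partitions into 3 parts *)
Definition vertex (R : realFieldType) (n : nat) (l : 'I_n -> R) (s : seq {set 'I_n}) : Prop :=
  size s = 3%N /\ admissible l s.

Definition merges (n : nat) (A B C D : {set 'I_n}) : seq (seq {set 'I_n}) :=
  [:: [:: A :|: B; C; D]; [:: A; B :|: C; D]; [:: A; B; C :|: D]; [:: D :|: A; B; C]].

Definition incident (R : realFieldType) (n : nat) (l : 'I_n -> R)
  (A B C D : {set 'I_n}) (s : seq {set 'I_n}) : Prop :=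
  exists2 m, m \in merges A B C D & admissible l m /\ cyc_eq m s.

Definition adjacent (R : realFieldType) (n : nat) (l : 'I_n -> R)
  (s t : seq {set 'I_n}) : Prop :=
  exists A B C D : {set 'I_n},
    admissible l [:: A; B; C; D] /\ incident l A B C D s /\ incident l A B C D t.

(* one step: an edge, or passing to another representative of the same vertex *)
Definition gstep (R : realFieldType) (n : nat) (l : 'I_n -> R)
  (s t : seq {set 'I_n}) : Prop :=
  adjacent l s t \/ (vertex l s /\ cyc_eq s t).

Definition gconnected (R : realFieldType) (n : nat) (l : 'I_n -> R)
  (s t : seq {set 'I_n}) : Prop :=
  clos_refl_trans _ (gstep l) s t.

(* Main.v *)
Require Import Defs.
From HB Require Import structures.
From mathcomp Require Import all_boot all_order all_algebra.
From mathcomp Require Import lra.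
From Stdlib Require Import Relations.
Import Order.TTheory GRing.Theory Num.Theory.
Local Open Scope ring_scope.

Definition o3 (aX aY aZ bX bY bZ cX cY cZ : bool) :=
  [|| aX && bY && cZ, aY && bZ && cX | aZ && bX && cY].
Definition g3 (aX aY aZ bX bY bZ cX cY cZ : bool) :=
  [&& [|| aX, aY | aZ], [|| bX, bY | bZ], [|| cX, cY | cZ],
      ~~ (aX && bX), ~~ (aX && cX), ~~ (bX && cX),
      ~~ (aY && bY), ~~ (aY && cY), ~~ (bY && cY),
      ~~ (aZ && bZ), ~~ (aZ && cZ) & ~~ (bZ && cZ)].
Definition o4 (aA aB aC aD bA bB bC bD cA cB cC cD : bool) :=
  [|| o3 aA aB aC bA bB bC cA cB cC, o3 aA aB aD bA bB bD cA cB cD,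
      o3 aA aC aD bA bC bD cA cC cD | o3 aB aC aD bB bC bD cB cC cD].
Lemma swap_t aX aY aZ bX bY bZ cX cY cZ :
  g3 aX aY aZ bX bY bZ cX cY cZ ->
  o3 aY aX aZ bY bX bZ cY cX cZ = ~~ o3 aX aY aZ bX bY bZ cX cY cZ.
Proof. by move: aX aY aZ bX bY bZ cX cY cZ; do 9!case. Qed.
Lemma m1 aA aB aC aD bA bB bC bD cA cB cC cD :
  g3 (aA||aB) aC aD (bA||bB) bC bD (cA||cB) cC cD ->
  o3 (aA||aB) aC aD (bA||bB) bC bD (cA||cB) cC cD = o4 aA aB aC aD bA bB bC bD cA cB cC cD.
Proof. move: aA aB aC aD bA bB bC bD cA cB cC cD; do 12!case; done. Qed.
Lemma m2 aA aB aC aD bA bB bC bD cA cB cC cD :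
  g3 aA (aB||aC) aD bA (bB||bC) bD cA (cB||cC) cD ->
  o3 aA (aB||aC) aD bA (bB||bC) bD cA (cB||cC) cD = o4 aA aB aC aD bA bB bC bD cA cB cC cD.
Proof. move: aA aB aC aD bA bB bC bD cA cB cC cD; do 12!case; done. Qed.
Lemma m3 aA aB aC aD bA bB bC bD cA cB cC cD :
  g3 aA aB (aC||aD) bA bB (bC||bD) cA cB (cC||cD) ->
  o3 aA aB (aC||aD) bA bB (bC||bD) cA cB (cC||cD) = o4 aA aB aC aD bA bB bC bD cA cB cC cD.
Proof. move: aA aB aC aD bA bB bC bD cA cB cC cD; do 12!case; done. Qed.
Lemma m4 aA aB aC aD bA bB bC bD cA cB cC cD :
  g3 (aD||aA) aB aC (bD||bA) bB bC (cD||cA) cB cC ->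
  o3 (aD||aA) aB aC (bD||bA) bB bC (cD||cA) cB cC = o4 aA aB aC aD bA bB bC bD cA cB cC cD.
Proof. move: aA aB aC aD bA bB bC bD cA cB cC cD; do 12!case; done. Qed.
Lemma o3_rot aX aY aZ bX bY bZ cX cY cZ :
  o3 aY aZ aX bY bZ bX cY cZ cX = o3 aX aY aZ bX bY bZ cX cY cZ.
Proof. by move: aX aY aZ bX bY bZ cX cY cZ; do 9!case. Qed.
Lemma g3_rot aX aY aZ bX bY bZ cX cY cZ :
  g3 aY aZ aX bY bZ bX cY cZ cX = g3 aX aY aZ bX bY bZ cX cY cZ.
Proof. by move: aX aY aZ bX bY bZ cX cY cZ; do 9!case. Qed.

Section Main.
Variables (n : nat) (a b c : 'I_n).
Definition orient (s : seq {set 'I_n}) :=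
  match s with [:: X; Y; Z] =>
    o3 (a \in X) (a \in Y) (a \in Z) (b \in X) (b \in Y) (b \in Z) (c \in X) (c \in Y) (c \in Z)
  | _ => false end.
Definition good (s : seq {set 'I_n}) :=
  match s with [:: X; Y; Z] =>
    g3 (a \in X) (a \in Y) (a \in Z) (b \in X) (b \in Y) (b \in Z) (c \in X) (c \in Y) (c \in Z)
  | _ => false end.
Definition or4 (A B C D : {set 'I_n}) :=
  o4 (a \in A) (a \in B) (a \in C) (a \in D) (b \in A) (b \in B) (b \in C) (b \in D)
     (c \in A) (c \in B) (c \in C) (c \in D).

Lemma rot3 (X Y Z : {set 'I_n}) k :
  [\/ rot k [:: X; Y; Z] = [:: X; Y; Z], rot k [:: X; Y; Z] = [:: Y; Z; X]
    | rot k [:: X; Y; Z] = [:: Z; X; Y]].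
Proof.
case: k => [|[|[|k]]]; [by constructor 1 | by constructor 2 | by constructor 3 |].
by constructor 1; rewrite rot_oversize.
Qed.

Lemma rot_inv s k : good s -> good (rot k s) /\ orient (rot k s) = orient s.
Proof.
case: s => [|X [|Y [|Z [|? ?]]]] //= Hg.
case: (rot3 X Y Z k) => ->.
- by [].
- split; rewrite /=; first by rewrite g3_rot.
  by rewrite o3_rot.
- split; rewrite /=; first by rewrite g3_rot g3_rot.
  by rewrite o3_rot o3_rot.
Qed.

Lemma merge_inv A B C D m : m \in merges A B C D -> good m -> orient m = or4 A B C D.
Proof.
rewrite !inE => /or4P [] /eqP -> /=; rewrite !inE => H.
- exact: m1.
- exact: m2.
- exact: m3.
- exact: m4.
Qed.

Lemma swap_inv X Y Z : good [:: X; Y; Z] -> orient [:: Y; X; Z] = ~~ orient [:: X; Y; Z].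
Proof. by move=> H; rewrite /= swap_t. Qed.
End Main.
Arguments good {n}.
Arguments orient {n}.
Arguments or4 {n}.
Arguments rot_inv [n a b c s] k.
Arguments merge_inv [n a b c A B C D m].
Arguments swap_inv [n a b c X Y Z].

Section Geo.
Variables (R : realFieldType) (n : nat) (l : 'I_n -> R) (hpos : forall i, 0 < l i).

Lemma pair_le (x y : 'I_n) (X : {set 'I_n}) : x != y -> x \in X -> y \in X ->
  l x + l y <= \sum_(i in X) l i.
Proof.
move=> xy xX yX; rewrite (bigD1 x) //= (bigD1 y) /=; last by rewrite yX eq_sym.
rewrite addrA lerDl; apply: sumr_ge0 => i _; exact: ltW.
Qed.

Lemma sep (x y : 'I_n) (X : {set 'I_n}) : x != y -> Ltotal l / 2%:R < l x + l y ->
  short l X -> (x \in X) && (y \in X) = false.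
Proof.
move=> xy hs; rewrite /short => hX; apply/negbTE/negP => /andP[xX yX].
have := pair_le x y X xy xX yX; lra.
Qed.

Lemma adm_good (a b c : 'I_n) (hab : a != b) (hac : a != c) (hbc : b != c)
  (h1 : Ltotal l / 2%:R < l a + l b) (h2 : Ltotal l / 2%:R < l a + l c)
  (h3 : Ltotal l / 2%:R < l b + l c) X Y Z :
  admissible l [:: X; Y; Z] -> good a b c [:: X; Y; Z].
Proof.
move=> /andP[/andP[/andP[_ _] /eqP Hcov] /=].
rewrite andbT => /and3P[sX sY sZ].
have cov x : [|| x \in X, x \in Y | x \in Z].
  by have := in_setT x; rewrite -Hcov !big_cons big_nil !inE orbF.
rewrite /g3 !cov /=.
by rewrite (sep _ _ _ hab h1 sX) (sep _ _ _ hac h2 sX) (sep _ _ _ hbc h3 sX) (sep _ _ _ hab h1 sY) (sep _ _ _ hac h2 sY)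
  (sep _ _ _ hbc h3 sY) (sep _ _ _ hab h1 sZ) (sep _ _ _ hac h2 sZ) (sep _ _ _ hbc h3 sZ).
Qed.
End Geo.
Arguments adm_good [R n l] hpos [a b c].

Theorem mainTheorem7 (R : realFieldType) (n : nat) (l : 'I_n -> R)
  (hn : (4 <= n)%N)
  (hpos : forall i, 0 < l i)
  (htri : forall i, l i < \sum_(j | j != i) l j)
  (hgen : forall J : {set 'I_n}, \sum_(i in J) l i != \sum_(i in ~: J) l i)
  (a b c : 'I_n)
  (hab : a != b) (hac : a != c) (hbc : b != c)
  (hla : l b <= l a) (hlb : l c <= l b)
  (hmax : forall i, i != a -> i != b -> i != c -> l i <= l c)
  (hbig : Ltotal l / 2%:R < l b + l c) :
  forall I J K : {set 'I_n}, vertex l [:: I; J; K] ->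
    ~ gconnected l [:: I; J; K] [:: J; I; K].
Proof.
have h1 : Ltotal l / 2%:R < l a + l b by lra.
have h2 : Ltotal l / 2%:R < l a + l c by lra.
have AG := adm_good hpos hab hac hbc h1 h2 hbig.
move=> I J K HV Hc.
have Hg0 : good a b c [:: I; J; K] by case: HV => _ /AG.
set o := orient a b c [:: I; J; K].
pose P s := good a b c s /\ orient a b c s = o.
have gm : forall A B C D m, m \in merges A B C D -> admissible l m -> good a b c m.
  by move=> A B C D m; rewrite !inE => /or4P [] /eqP ->; apply: AG.
have inv : forall s t, gstep l s t -> P s -> P t.
  move=> s t [[A [B [C [D [HA [[m Hm [Ham [k ->]]] [m' Hm' [Ham' [k' ->]]]]]]]]] | [_ [k ->]]] [Hgs Hos].
  - have g1 := gm _ _ _ _ _ Hm Ham; have g2 := gm _ _ _ _ _ Hm' Ham'.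
    have [_ E1] := rot_inv k g1; have [G2 E2] := rot_inv k' g2.
    split => //; rewrite E2 (merge_inv Hm' g2) -(merge_inv Hm g1) -E1 //.
  - by have [G E] := rot_inv k Hgs; split => //; rewrite E.
have main : forall s t, clos_refl_trans _ (gstep l) s t -> P s -> P t.
  move=> s t; elim => [x y /inv| x | x y z _ IH1 _ IH2] //; auto.
have [_ E] := main _ _ Hc (conj Hg0 erefl).
by move: E; rewrite swap_inv // /o; case: (orient _ _ _ _).
Qed.
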